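(* Let $m\in\mathbb{Z}^+$ and $r\in\mathbb{Z}$ be relatively prime. Then for any $n\in\mathbb{Z}^+$ (such that $km+r\neq0$ for $0\le k\le n-1$), $$\frac1n\sum_{k=0}^{n-1}\frac1{km+r}\equiv\frac1r+\frac m2[\![2\mid n]\!]\pmod m,$$ where $[\![2\mid n]\!]$ is $1$ if $n$ is even and $0$ otherwise.
   Context: For rational numbers $u,v$, $u\equiv v\pmod m$ means that $(u-v)/m$ is a rational number whose reduced denominator is coprime to $m$. *)

(* Defs.v *)
From mathcomp Require Import all_boot all_order all_algebra.
Set Implicit Arguments. Unset Strict Implicit. Unset Printing Implicit Defensive.
Import Order.TTheory GRing.Theory Num.Theory.
Local Open Scope ring_scope.

(* u == v (mod m) for rationals: (u - v)/m is a rational whose reduced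
   denominator is coprime to m.  (denq is the reduced denominator, > 0.) *)
Definition rat_congr (u v : rat) (m : nat) : Prop :=
  coprime `|denq ((u - v) / m%:R)|%N m.

(* Main.v *)
Require Import Defs.
From mathcomp Require Import all_boot all_order all_algebra.
From mathcomp Require Import ring lra zify.
Import Order.TTheory GRing.Theory Num.Theory.
Local Open Scope ring_scope.

Definition Zm (q : nat) (x : rat) :=
  exists a d : int, [/\ d != 0, coprime `|d| q & x = a%:~R / d%:~R].

Lemma Zm_int q (z : int) : Zm q z%:~R.
Proof. exists z, 1; split => //; first by rewrite coprime1n. by rewrite divr1. Qed.

Lemma Zm_nat q (z : nat) : Zm q z%:R.
Proof. exact: (Zm_int q z). Qed.

Lemma Zm_add q x y : Zm q x -> Zm q y -> Zm q (x + y).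
Proof.
move=> [a [d [d0 cd ->]]] [a' [d' [d0' cd' ->]]].
exists (a * d' + a' * d), (d * d'); split.
- by rewrite mulf_neq0.
- by rewrite abszM coprimeMl cd cd'.
- have h1 : (d%:~R : rat) != 0 by rewrite intr_eq0.
  have h2 : (d'%:~R : rat) != 0 by rewrite intr_eq0.
  by rewrite !rmorphD !rmorphM /= addf_div.
Qed.

Lemma Zm_mul q x y : Zm q x -> Zm q y -> Zm q (x * y).
Proof.
move=> [a [d [d0 cd ->]]] [a' [d' [d0' cd' ->]]].
exists (a * a'), (d * d'); split.
- by rewrite mulf_neq0.
- by rewrite abszM coprimeMl cd cd'.
- have h1 : (d%:~R : rat) != 0 by rewrite intr_eq0.
  have h2 : (d'%:~R : rat) != 0 by rewrite intr_eq0.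
  by rewrite !rmorphM /= mulf_div.
Qed.

Lemma Zm_opp q x : Zm q x -> Zm q (- x).
Proof.
move=> h; have -> : - x = (-1)%:~R * x by rewrite mulN1r.
by apply: Zm_mul => //; apply: Zm_int.
Qed.

Lemma Zm_sub q x y : Zm q x -> Zm q y -> Zm q (x - y).
Proof. by move=> hx hy; apply: Zm_add => //; apply: Zm_opp. Qed.

Lemma Zm_sum q n (f : nat -> rat) : (forall i, (i < n)%N -> Zm q (f i)) ->
  Zm q (\sum_(i < n) f i).
Proof.
move=> h; apply: (big_rec (Zm q)); first by apply: (Zm_int q 0).
by move=> i y _ hy; apply: Zm_add => //; apply: h.
Qed.

Lemma Zm_inv q (d : int) : d != 0 -> coprime `|d| q -> Zm q (d%:~R)^-1.
Proof. by move=> d0 cd; exists 1, d; split => //; rewrite mul1r. Qed.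

Lemma Zm_weak q q' x : (q %| q')%N -> Zm q' x -> Zm q x.
Proof.
move=> dq [a [d [d0 cd ->]]]; exists a, d; split => //.
exact: coprime_dvdr cd.
Qed.

Lemma Zm_denq q x : Zm q x -> coprime `|denq x| q.
Proof.
move=> [a [d [d0 cd ex]]].
have hx : x * d%:~R = a%:~R.
  by rewrite ex mulfVK // intr_eq0.
have e : (numq x * d = a * denq x)%R.
  apply: (@intr_inj rat).
  rewrite !rmorphM /= -hx.
  have hd : ((denq x)%:~R : rat) != 0 by rewrite intr_eq0 denq_neq0.
  have hxe : x = (numq x)%:~R / (denq x)%:~R by rewrite divq_num_den.
  move: hd hxe; set N := ((numq x)%:~R : rat); set D := ((denq x)%:~R : rat).
  move=> hd hxe; rewrite [in RHS]hxe.
  by rewrite mulrAC divfK.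
have dv : (denq x %| numq x * d)%Z by rewrite e dvdz_mull.
have : (denq x %| d)%Z.
  rewrite -(Gauss_dvdzr _ (n:=numq x)) //.
  by rewrite /coprimez gcdzC; apply: coprime_num_den.
rewrite dvdzE => hdv.
exact: coprime_dvdl hdv cd.
Qed.

Definition F (m : nat) (r : int) (k : nat) : rat := ((k%:Z * m%:Z + r)%:~R : rat)^-1.

Lemma cop_shift q m r k : (q %| m)%N -> coprime `|r| q ->
  coprime `|k%:Z * m%:Z + r| q.
Proof.
move=> /dvdnP [c ->] cr.
have -> : k%:Z * (c * q)%N%:Z + r = (k * c)%N%:Z * q%:Z + r.
  by rewrite !PoszM mulrA.
rewrite /coprime gcdnC.
have := gcdzMDl (k * c)%N%:Z q%:Z r.
rewrite /gcdz /= => -[e]; apply/eqP; transitivity (gcdn q `|r|); first exact: e.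
apply/eqP.
by rewrite gcdnC.
Qed.

Lemma nz_shift q m r k : (1 < q)%N -> (q %| m)%N -> coprime `|r| q ->
  k%:Z * m%:Z + r != 0.
Proof.
move=> q1 dq cr; apply/negP => /eqP h.
have := @cop_shift q m r k dq cr; rewrite h /= /coprime gcd0n => /eqP q1'.
by rewrite q1' in q1.
Qed.

Lemma reindex_mul (f : nat -> rat) p b :
  \sum_(k < p * b) f k = \sum_(i < p) \sum_(t < b) f (i + p * t)%N.
Proof.
elim: b => [|b IH].
  rewrite muln0 big_ord0; rewrite big1 // => i _; by rewrite big_ord0.
rewrite mulnSr big_split_ord /= IH.
under [in RHS]eq_bigr => i _ do rewrite big_ord_recr /=.
rewrite big_split /=; congr (_ + _).
by apply: eq_bigr => i _; rewrite addnC.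
Qed.

Lemma F_reindex m r p i t :
  F m r (i + p * t)%N = F (p * m) (r + i%:Z * m%:Z) t.
Proof.
rewrite /F; congr (_^-1); congr (_%:~R).
rewrite !PoszD !PoszM; ring.
Qed.

Lemma Zm_half q (X : int) : (odd q || (2 %| X)%Z) -> Zm q (X%:~R / 2).
Proof.
case/orP => h.
- by exists X, 2; split => //=; rewrite coprime2n.
- case/dvdzP: h => c ->. rewrite rmorphM /= mulfK //; exact: Zm_int.
Qed.

Lemma sum_id n : ((\sum_(i < n) i) * 2 = n * n.-1)%N.
Proof.
elim: n => [|n IH]; first by rewrite big_ord0.
rewrite big_ord_recr /= mulnDl IH. case: n {IH} => [|n] //=. nia.
Qed.

Lemma expand (R M I D : rat) : R != 0 -> D != 0 -> D = I * M + R ->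
  D^-1 = R^-1 - I * M * (R^-1 * R^-1) + M ^+ 2 * (I ^+ 2 * (R^-1 * R^-1 * D^-1)).
Proof.
move=> hR hD e; rewrite e in hD *. field. by rewrite hR hD.
Qed.

Lemma F_eq m r i : F m r i = (i%:R * m%:R + r%:~R)^-1.
Proof. by rewrite /F rmorphD rmorphM. Qed.

Lemma r_nz q r : (1 < q)%N -> coprime `|r| q -> r != 0.
Proof.
move=> q1 c; apply/negP => /eqP h; move: c; rewrite h /coprime gcd0n => /eqP h'.
by rewrite h' in q1.
Qed.

Lemma prime_case q m r p : prime p -> (1 < q)%N -> (0 < m)%N -> (q %| m)%N ->
  coprime `|r| q ->
  Zm q ((\sum_(i < p) F m r i - p%:R / r%:~R
         - (if ~~ odd p then p%:R * m%:R / 2 else 0)) / (p%:R * m%:R)).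
Proof.
move=> pp q1 m0 dq cr.
have rnz := @r_nz q r q1 cr.
have hR : (r%:~R : rat) != 0 by rewrite intr_eq0.
have hM : (m%:R : rat) != 0 by rewrite pnatr_eq0 -lt0n.
have hF : forall i : nat, ((i%:R * m%:R + r%:~R) : rat) != 0.
  move=> i; have := @nz_shift q m r i q1 dq cr.
  by rewrite -(intr_eq0 rat) rmorphD rmorphM /=.
have ZR : Zm q (r%:~R)^-1 by apply: Zm_inv.
have ZF : forall i, Zm q (F m r i).
  by move=> i; apply: Zm_inv; [exact: (@nz_shift q m r i q1 dq cr) | exact: (@cop_shift q m r i dq cr)].
have [->|podd] := even_prime pp.
- rewrite big_ord_recr big_ord_recr big_ord0 /= !F_eq /=.
  have hRM : (m%:R + r%:~R : rat) != 0 by have := hF 1%N; rewrite mul1r.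
  have -> : (0 + (0%:R * m%:R + r%:~R)^-1 + (1%:R * m%:R + r%:~R)^-1 -
      2%:R / r%:~R - 2%:R * m%:R / 2) / (2%:R * m%:R) =
      (-(1 + r * (r + m%:Z)))%:~R / 2 * ((r * (r + m%:Z))%:~R)^-1 :> rat.
    rewrite rmorphN rmorphD !rmorphM rmorphD /=.
    move: hR hM hRM; set R := (r%:~R : rat); set M := (m%:R : rat).
    rewrite -/M. move=> hR hM hRM.
    field. by rewrite addrC hRM hR hM.
  apply: (@Zm_mul q ((- (1 + r * (r + m%:Z)))%:~R / 2)).
  + apply: Zm_half; case: (boolP (odd q)) => //= hq.
    rewrite dvdzE abszN -dvdzE.
    have d2q : (2 %| q)%N by rewrite dvdn2.
    have hr : ~~ (2 %| r)%Z.
      rewrite dvdzE /=. apply/negP => h.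
      have : (2 %| gcdn `|r| q)%N by rewrite dvdn_gcd h d2q.
      by rewrite (eqP cr).
    have hm : (2 %| m%:Z)%Z by rewrite dvdzE /=; exact: dvdn_trans d2q dq.
    move: hr hm; move: (m%:Z) => mm hr hm.
    have [s ->] : exists s, r = 2*s+1 by exists (r %/ 2)%Z; lia.
    case/dvdzP: hm => t ->.
    apply/dvdzP; exists (2*s*s+2*s+1 + (2 * s + 1) * t). ring.
  + apply: Zm_inv.
      rewrite mulf_neq0 //. have := @nz_shift q m r 1 q1 dq cr. by rewrite mul1r addrC.
    rewrite abszM coprimeMl cr /=. have := @cop_shift q m r 1 dq cr. by rewrite mul1r addrC.
- set h := p./2.
  have ep : p = h.*2.+1 by rewrite -[p in LHS]odd_double_half podd.
  rewrite podd /= subr0.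
  set RR := ((r%:~R : rat)^-1 * (r%:~R)^-1).
  set W := \sum_(i < p) ((i%:R : rat) ^+ 2 * (RR * F m r i)).
  have ex : forall i, F m r i = (r%:~R)^-1 - i%:R * m%:R * RR
                          + (m%:R) ^+ 2 * ((i%:R) ^+ 2 * (RR * F m r i)).
    by move=> i; rewrite F_eq; apply: expand.
  have sid : (\sum_(i < p) i = p * h)%N.
    have e1 : p.-1 = h.*2 by rewrite {1}ep.
    have := sum_id p. rewrite e1 -muln2 mulnA => /eqP.
    by rewrite eqn_pmul2r // => /eqP.
  have hS : \sum_(i < p) F m r i = p%:R * (r%:~R)^-1 - (p * h)%:R * m%:R * RR
                                   + (m%:R) ^+ 2 * W.
    rewrite (eq_bigr _ (fun (i : 'I_p) _ => ex i)) big_split /= sumrB sumr_const card_ord.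
    rewrite -!mulr_suml -mulr_sumr -natr_sum sid; by rewrite [p%:R * _]mulr_natl.
  rewrite hS.
  have hp : (p%:R : rat) != 0 by rewrite pnatr_eq0 -lt0n prime_gt0.
  have -> : (p%:R * (r%:~R)^-1 - (p * h)%:R * m%:R * RR + m%:R ^+ 2 * W -
      p%:R / r%:~R) / (p%:R * m%:R) = - (h%:R * RR) + m%:R / p%:R * W :> rat.
    rewrite natrM. move: hp hM; set M := (m%:R : rat); set P := (p%:R : rat).
    move=> hp hM'. field. by rewrite hp hM'.
  apply: Zm_add.
    apply: Zm_opp; apply: Zm_mul; [exact: (Zm_nat q h) | rewrite /RR; apply: Zm_mul; exact: ZR].
  apply: Zm_mul; last first.
    apply: (@Zm_sum q p (fun i : nat => (i%:R : rat) ^+ 2 * (RR * F m r i))) => i _.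
    have Zi : Zm q ((i%:R : rat) ^+ 2) by rewrite -natrX; apply: Zm_nat.
    apply: Zm_mul => //; apply: Zm_mul => //; rewrite /RR; apply: Zm_mul; exact: ZR.
  case: (boolP (p %| m)%N) => hd.
    rewrite -(divnK hd) natrM mulfK //; exact: Zm_nat.
  apply: Zm_mul; first exact: Zm_nat.
  apply: (@Zm_inv q p%:Z); first by rewrite -lt0n prime_gt0.
  rewrite /= prime_coprime //; apply/negP => hpq; move/negP: hd; apply.
  exact: dvdn_trans hpq dq.
Qed.

Lemma core n : (0 < n)%N -> forall q m r, (1 < q)%N -> (0 < m)%N -> (q %| m)%N ->
  coprime `|r| q ->
  Zm q ((\sum_(k < n) F m r k - n%:R / r%:~R
         - (if ~~ odd n then n%:R * m%:R / 2 else 0)) / (n%:R * m%:R)).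
Proof.
elim/ltn_ind: n => n IH n0 q m r q1 m0 dq cr.
have rnz := @r_nz q r q1 cr.
have hR : (r%:~R : rat) != 0 by rewrite intr_eq0.
have hM : (m%:R : rat) != 0 by rewrite pnatr_eq0 -lt0n.
case: (ltngtP n 1) => [|n1|->]; first by rewrite ltnNge n0.
- set p := pdiv n.
  have pp : prime p by apply: pdiv_prime.
  have p1 : (1 < p)%N by apply: prime_gt1.
  set b := (n %/ p)%N.
  have en : n = (p * b)%N by rewrite mulnC divnK // pdiv_dvd.
  have bn : (b < n)%N by apply: ltn_Pdiv.
  have b0 : (0 < b)%N by rewrite lt0n; apply/eqP => b0; rewrite en b0 muln0 in n0.
  have pm0 : (0 < p * m)%N by rewrite muln_gt0 m0 ltnW.
  have hpm : ((p * m)%N%:R : rat) != 0 by rewrite pnatr_eq0 -lt0n.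
  have hb : (b%:R : rat) != 0 by rewrite pnatr_eq0 -lt0n.
  have hp : (p%:R : rat) != 0 by rewrite pnatr_eq0 -lt0n ltnW.
  have dqp : (q %| p * m)%N by apply: dvdn_mull.
  set Ei := fun i : nat =>
    (\sum_(t < b) F (p * m) (r + i%:Z * m%:Z) t - b%:R / (r + i%:Z * m%:Z)%:~R
     - (if ~~ odd b then b%:R * (p * m)%N%:R / 2 else 0)) / (b%:R * (p * m)%N%:R).
  have ZE : forall i, Zm q (Ei i).
    move=> i; apply: IH => //.
    by have := @cop_shift q m r i dq cr; rewrite addrC.
  have ZE0 := @prime_case q m r p pp q1 m0 dq cr.
  set E0 := (\sum_(i < p) F m r i - p%:R / r%:~R
         - (if ~~ odd p then p%:R * m%:R / 2 else 0)) / (p%:R * m%:R) in ZE0.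
  have hSi : forall i : nat, \sum_(t < b) F (p * m) (r + i%:Z * m%:Z) t =
     (b%:R * (p * m)%N%:R) * Ei i + b%:R * ((r + i%:Z * m%:Z)%:~R)^-1
     + (if ~~ odd b then b%:R * (p * m)%N%:R / 2 else 0).
    move=> i; rewrite /Ei. set X := \sum_(t < b) _.
    rewrite mulrC divfK ?mulf_neq0 //. by rewrite addrAC subrK subrK.
  have hP : \sum_(i < p) F m r i = (p%:R * m%:R) * E0 + p%:R / r%:~R
          + (if ~~ odd p then p%:R * m%:R / 2 else 0).
    rewrite /E0 mulrC divfK ?mulf_neq0 //. by rewrite addrAC subrK subrK.
  rewrite en reindex_mul.
  under eq_bigr => i _ do under eq_bigr => t _ do rewrite F_reindex.
  rewrite (eq_bigr _ (fun (i : 'I_p) _ => hSi i)) !big_split /= -!mulr_sumr.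
  have -> : \sum_(i < p) ((r + i%:Z * m%:Z)%:~R : rat)^-1 = \sum_(i < p) F m r i.
    by apply: eq_bigr => i _; rewrite /F addrC.
  rewrite hP sumr_const card_ord -[(if _ then _ else _) *+ _]mulr_natr.
  have h2 : (p%:R : rat) = 2 * (p./2)%:R + (odd p)%:R.
    by rewrite -{1}(odd_double_half p) natrD -muln2 natrM mulrC addrC.
  have -> : ((b%:R * (p * m)%N%:R * \sum_(i < p) Ei i +
     b%:R * (p%:R * m%:R * E0 + p%:R / r%:~R + (if ~~ odd p then p%:R * m%:R / 2 else 0)) +
     (if ~~ odd b then b%:R * (p * m)%N%:R / 2 else 0) * p%:R - (p * b)%N%:R / r%:~R -
     (if ~~ odd (p * b) then (p * b)%N%:R * m%:R / 2 else 0)) / ((p * b)%N%:R * m%:R))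
     = \sum_(i < p) Ei i + E0 + (if ~~ odd b then (p./2)%:R else 0) :> rat.
    move: h2 hp hb; rewrite !natrM oddM.
    set P := (p%:R : rat); set B := (b%:R : rat); set M := (m%:R : rat).
    set R := (r%:~R : rat); set H := ((p./2)%:R : rat).
    set SE := \sum_(i < p) Ei i.
    have hH : H != 0 by rewrite /H pnatr_eq0 -lt0n half_gt0.
    case: (odd p); case: (odd b) => /= h2 hp' hb'; rewrite h2 in hp' *; field; by rewrite ?hM ?hR ?hp' ?hb' ?hH.
  apply: Zm_add; first apply: Zm_add => //.
    exact: Zm_sum.
  by case: (~~ odd b); [apply: Zm_nat | apply: (Zm_nat q 0)].
- rewrite big_ord1 /F /= mul0r add0r !mul1r subrr subr0 mul0r.
  exact: (Zm_nat q 0).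
Qed.

Theorem lemma3p1 (m : nat) (r : int) (n : nat)
  (hm : (0 < m)%N) (hcop : coprime m `|r|%N) (hn : (0 < n)%N)
  (hnz : forall k : nat, (k < n)%N -> (k%:Z * m%:Z + r) != 0) :
  rat_congr
    ((n%:R)^-1 * \sum_(k < n) ((k%:Z * m%:Z + r)%:~R : rat)^-1)
    ((r%:~R : rat)^-1 + (m%:R / 2%:R) * (if ~~ odd n then 1 else 0))
    m.
Proof.
rewrite /rat_congr.
case: (ltngtP m 1) => [|m1|->]; first by rewrite ltnNge hm.
  have Z := @core n hn m m r m1 hm (dvdnn m) ltac:(by rewrite coprime_sym).
  apply: Zm_denq.
  have -> : \sum_(k < n) ((k%:Z * m%:Z + r)%:~R : rat)^-1 = \sum_(k < n) F m r k by [].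
  move: Z; set S := \sum_(k < n) F m r k.
  have hR : (r%:~R : rat) != 0.
    apply/negP; rewrite intr_eq0 => /eqP r0; move: hcop; rewrite r0 /coprime gcdn0.
    by move=> /eqP m1'; rewrite m1' in m1.
  have hM : (m%:R : rat) != 0 by rewrite pnatr_eq0 -lt0n.
  have hN : (n%:R : rat) != 0 by rewrite pnatr_eq0 -lt0n.
  case: (~~ odd n) => Z.
    have -> : (n%:R^-1 * S - ((r%:~R)^-1 + m%:R / 2%:R * 1)) / m%:R =
      (S - n%:R / r%:~R - n%:R * m%:R / 2) / (n%:R * m%:R) :> rat.
      move: hR hM hN; set R := (r%:~R : rat); set M := (m%:R : rat); set N := (n%:R : rat).
      move=> hR hM hN; field; by rewrite hR hM hN.
    exact: Z.
  have -> : (n%:R^-1 * S - ((r%:~R)^-1 + m%:R / 2%:R * 0)) / m%:R =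
    (S - n%:R / r%:~R - 0) / (n%:R * m%:R) :> rat.
    move: hR hM hN; set R := (r%:~R : rat); set M := (m%:R : rat); set N := (n%:R : rat).
    move=> hR hM hN; field; by rewrite hR hM hN.
  exact: Z.
by rewrite coprimen1.
Qed.
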